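(* Let $X$ satisfy (P1) and (P2), let $\alpha$ be a saddle connection on $X$ which is neither a side nor a diagonal, and let $\alpha_{a+1},\dots,\alpha_{a+r}$ be a maximal run of consecutive adjacent segments in its polygonal decomposition which is not contained in a short cylinder. Then for any three consecutive segments $\alpha_i,\alpha_{i+1},\alpha_{i+2}$ of the run, no two of them lie in the same polygon.
   Context: $X$ is a translation surface obtained from finitely many Euclidean polygons by gluing pairs of parallel sides of equal length by translations, with (P1): each polygon convex with all angles obtuse or right; (P2): no two sides of the same polygon are identified. Saddle connection: straight segment between singularities (images of vertices) with none in its interior; a diagonal is a segment inside a polygon joining two non-adjacent vertices. Polygonal decomposition: cut $\alpha$ each time it passes from one polygon to another, giving consecutive oriented segments $\alpha_1,\dots,\alpha_k$, each in one polygon. A segment in polygon $P$ is adjacent if it goes from the relative interior of a side $e$ of $P$ to the relative interior of a side adjacent to $e$; otherwise non-adjacent. The type of a segment going from the interior of side $e$ to the interior of side $e'$ of the same polygon is $e\to e'$. A maximal run of consecutive adjacent segments is contained in a short cylinder if it has at least two segments and, whenever $\alpha_i$ and $\alpha_{i+2}$ both belong to the run, $\alpha_{i+2}$ has the same type as $\alpha_i$. *)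

(* Defs.v *)
From Stdlib Require Import Reals Lra Lia List Arith.
Import ListNotations.
Open Scope R_scope.

Definition pt := (R * R)%type.
Definition padd (x y : pt) : pt := (fst x + fst y, snd x + snd y).
Definition psub (x y : pt) : pt := (fst x - fst y, snd x - snd y).
Definition pscale (t : R) (x : pt) : pt := (t * fst x, t * snd x).
Definition cross (x y : pt) : R := fst x * snd y - snd x * fst y.
Definition dot (x y : pt) : R := fst x * fst y + snd x * snd y.

(* Polygon p (p < npoly) has vertices vert p 0, ..., vert p (nsides p - 1),
   listed counterclockwise; side j of polygon p goes from vert p j to
   vert p ((j+1) mod nsides p).  glue p j = (q, l) means side j of polygon p
   is identified with side l of polygon q. *)
Record surface := {
  npoly : nat;
  nsides : nat -> nat;
  vert : nat -> nat -> pt;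
  glue : nat -> nat -> nat * nat
}.

Definition vnext (X : surface) (p j : nat) : pt :=
  vert X p ((j + 1) mod nsides X p)%nat.
Definition vprev (X : surface) (p j : nat) : pt :=
  vert X p ((j + nsides X p - 1) mod nsides X p)%nat.
Definition edge (X : surface) (p j : nat) : pt := psub (vnext X p j) (vert X p j).

Definition sides_adjacent (X : surface) (p j j' : nat) : Prop :=
  j' = ((j + 1) mod nsides X p)%nat \/ j = ((j' + 1) mod nsides X p)%nat.

(* Well-formedness: finitely many polygons (at least 3 vertices each);
   gluing is an involution pairing sides that are parallel, of equal length
   and glued by translation (opposite edge vectors for counterclockwise
   polygons). *)
Definition translation_surface (X : surface) : Prop :=
  (forall p, (p < npoly X)%nat -> (3 <= nsides X p)%nat) /\
  (forall p j, (p < npoly X)%nat -> (j < nsides X p)%nat ->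
     let q := fst (glue X p j) in let l := snd (glue X p j) in
     (q < npoly X)%nat /\ (l < nsides X q)%nat /\
     glue X q l = (p, j) /\ (q, l) <> (p, j) /\
     edge X q l = pscale (-1) (edge X p j)).

Definition convex_ccw (X : surface) (p : nat) : Prop :=
  forall j k, (j < nsides X p)%nat -> (k < nsides X p)%nat ->
    k <> j -> k <> ((j + 1) mod nsides X p)%nat ->
    0 < cross (edge X p j) (psub (vert X p k) (vert X p j)).

Definition angles_right_or_obtuse (X : surface) (p : nat) : Prop :=
  forall j, (j < nsides X p)%nat ->
    dot (psub (vprev X p j) (vert X p j)) (psub (vnext X p j) (vert X p j)) <= 0.

Definition P1 (X : surface) : Prop :=
  forall p, (p < npoly X)%nat -> convex_ccw X p /\ angles_right_or_obtuse X p.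

Definition P2 (X : surface) : Prop :=
  forall p j, (p < npoly X)%nat -> (j < nsides X p)%nat -> fst (glue X p j) <> p.

Definition in_interior (X : surface) (p : nat) (x : pt) : Prop :=
  forall j, (j < nsides X p)%nat -> 0 < cross (edge X p j) (psub x (vert X p j)).

Definition in_side_relint (X : surface) (p j : nat) (x : pt) : Prop :=
  exists t, 0 < t < 1 /\ x = padd (vert X p j) (pscale t (edge X p j)).

Definition is_vertex (X : surface) (p : nat) (x : pt) : Prop :=
  exists j, (j < nsides X p)%nat /\ x = vert X p j.

Record piece := mkPiece { pc_poly : nat; pc_start : pt; pc_end : pt }.
Definition dpiece := mkPiece 0 (0, 0) (0, 0).
Definition seg (s : list piece) (i : nat) : piece := nth i s dpiece.

(* A straight segment on X between singularities which is not a side: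
   consecutive segments alpha_0, ..., alpha_(k-1) (0-based), all with the same
   direction, each with its open part in the interior of its polygon, starting
   and ending at vertices, passing from one polygon to the next through the
   relative interior of a side via the gluing translation. *)
Definition transverse_chain (X : surface) (s : list piece) : Prop :=
  s <> [] /\
  (exists d : pt, d <> (0, 0) /\
     forall i, (i < length s)%nat ->
       exists t, 0 < t /\ pc_end (seg s i) = padd (pc_start (seg s i)) (pscale t d)) /\
  (forall i, (i < length s)%nat ->
     (pc_poly (seg s i) < npoly X)%nat /\
     forall u, 0 < u < 1 ->
       in_interior X (pc_poly (seg s i))
         (padd (pc_start (seg s i))
               (pscale u (psub (pc_end (seg s i)) (pc_start (seg s i)))))) /\
  is_vertex X (pc_poly (seg s 0)) (pc_start (seg s 0)) /\
  is_vertex X (pc_poly (seg s (length s - 1))) (pc_end (seg s (length s - 1))) /\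
  (forall i, (i + 1 < length s)%nat ->
     exists j, (j < nsides X (pc_poly (seg s i)))%nat /\
       in_side_relint X (pc_poly (seg s i)) j (pc_end (seg s i)) /\
       let q := fst (glue X (pc_poly (seg s i)) j) in
       let l := snd (glue X (pc_poly (seg s i)) j) in
       pc_poly (seg s (i + 1)) = q /\
       pc_start (seg s (i + 1)) =
         padd (pc_end (seg s i)) (psub (vnext X q l) (vert X (pc_poly (seg s i)) j))).

Definition is_side (X : surface) (s : list piece) : Prop :=
  exists p j, (p < npoly X)%nat /\ (j < nsides X p)%nat /\
    (s = [mkPiece p (vert X p j) (vnext X p j)] \/
     s = [mkPiece p (vnext X p j) (vert X p j)]).

Definition is_diagonal (X : surface) (s : list piece) : Prop :=
  exists p j k, (p < npoly X)%nat /\ (j < nsides X p)%nat /\ (k < nsides X p)%nat /\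
    j <> k /\ k <> ((j + 1) mod nsides X p)%nat /\ j <> ((k + 1) mod nsides X p)%nat /\
    s = [mkPiece p (vert X p j) (vert X p k)].

(* Saddle connection (every vertex image counts as a singularity): either a
   side, or a straight segment leaving a vertex into the interior of a polygon
   (a diagonal if it stays in one polygon). *)
Definition saddle_connection (X : surface) (s : list piece) : Prop :=
  is_side X s \/ transverse_chain X s.

Definition seg_type (X : surface) (s : list piece) (i p j j' : nat) : Prop :=
  (i < length s)%nat /\ pc_poly (seg s i) = p /\
  (j < nsides X p)%nat /\ (j' < nsides X p)%nat /\
  in_side_relint X p j (pc_start (seg s i)) /\
  in_side_relint X p j' (pc_end (seg s i)).

Definition adjacent_seg (X : surface) (s : list piece) (i : nat) : Prop :=
  exists p j j', seg_type X s i p j j' /\ sides_adjacent X p j j'.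

Definition same_type (X : surface) (s : list piece) (i i' : nat) : Prop :=
  exists p j j', seg_type X s i p j j' /\ seg_type X s i' p j j'.

(* alpha_a, ..., alpha_(a+r-1) (0-based) is a maximal run of consecutive
   adjacent segments. *)
Definition maximal_run (X : surface) (s : list piece) (a r : nat) : Prop :=
  (1 <= r)%nat /\ (a + r <= length s)%nat /\
  (forall i, (a <= i < a + r)%nat -> adjacent_seg X s i) /\
  (a = 0%nat \/ ~ adjacent_seg X s (a - 1)) /\
  ((a + r)%nat = length s \/ ~ adjacent_seg X s (a + r)).

Definition in_short_cylinder (X : surface) (s : list piece) (a r : nat) : Prop :=
  (2 <= r)%nat /\
  forall i, (a <= i)%nat -> (i + 2 < a + r)%nat -> same_type X s i (i + 2).

(* Main.v *)
Require Import Defs.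
From Stdlib Require Import Reals List Arith.
From Stdlib Require Import Lra Lia Psatz.
Open Scope R_scope.

Lemma ident (u z1 z2 : pt) : cross z1 z2 * dot u u = dot u z1 * cross u z2 - cross u z1 * dot u z2.
Proof. destruct u, z1, z2; unfold cross, dot; simpl; ring. Qed.
Lemma Npos (u w : pt) : 0 < cross u w \/ 0 < cross w u -> 0 < dot u u.
Proof. destruct u as [a b], w as [c e]; unfold cross, dot; simpl; intros H.
  destruct (Req_dec a 0); destruct (Req_dec b 0); subst; try nra. Qed.
Lemma crossA (x y : pt) : cross x y = - cross y x.
Proof. destruct x, y; unfold cross; simpl; ring. Qed.
Lemma dotC (x y : pt) : dot x y = dot y x.
Proof. destruct x, y; unfold dot; simpl; ring. Qed.

Lemma V1 (u w c d : pt) : 0 < cross u w -> 0 <= dot u w -> cross u d < 0 -> 0 < cross w d ->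
  0 < cross c u -> 0 <= dot c u -> 0 < cross c d -> False.
Proof. intros H1 H2 H3 H4 H5 H6 H7.
  assert (N: 0 < dot u u) by (apply (Npos u w); auto).
  pose proof (ident u w d) as I1. pose proof (ident u c d) as I2.
  rewrite (crossA c u) in H5. rewrite dotC in H6.
  assert (0 < cross w d * dot u u) by nra.
  assert (0 < cross c d * dot u u) by nra.
  assert (dot u d < 0) by nra. nra. Qed.
Lemma V2 (u w c d : pt) : 0 < cross u w -> 0 <= dot u w -> cross u d < 0 -> 0 < cross w d ->
  0 < cross w c -> 0 <= dot w c -> cross c d < 0 -> False.
Proof. intros H1 H2 H3 H4 H5 H6 H7.
  assert (N: 0 < dot w w) by (apply (Npos w u); auto).
  pose proof (ident w u d) as I1. pose proof (ident w c d) as I2.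
  rewrite (crossA u w) in H1. rewrite dotC in H2.
  assert (cross u d * dot w w < 0) by nra.
  assert (cross c d * dot w w < 0) by nra.
  assert (dot w d < 0) by nra. nra. Qed.
Lemma V3 (u w c d : pt) : 0 < cross w u -> 0 <= dot w u -> cross u d < 0 -> 0 < cross w d ->
  0 < cross u c -> 0 <= dot u c -> 0 < cross c d -> False.
Proof. intros H1 H2 H3 H4 H5 H6 H7.
  assert (N: 0 < dot u u) by (apply (Npos u w); auto).
  pose proof (ident u w d) as I1. pose proof (ident u c d) as I2.
  rewrite (crossA w u) in H1. rewrite dotC in H2.
  assert (0 < cross w d * dot u u) by nra.
  assert (0 < cross c d * dot u u) by nra.
  assert (0 < dot u d) by nra. nra. Qed.
Lemma V4 (u w c d : pt) : 0 < cross w u -> 0 <= dot w u -> cross u d < 0 -> 0 < cross w d ->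
  0 < cross c w -> 0 <= dot c w -> cross c d < 0 -> False.
Proof. intros H1 H2 H3 H4 H5 H6 H7.
  assert (N: 0 < dot w w) by (apply (Npos w u); auto).
  pose proof (ident w u d) as I1. pose proof (ident w c d) as I2.
  rewrite (crossA c w) in H5. rewrite dotC in H6.
  assert (cross u d * dot w w < 0) by nra.
  assert (cross c d * dot w w < 0) by nra.
  assert (0 < dot w d) by nra. nra. Qed.
Lemma VG (p q y d : pt) : 0 < cross p y -> 0 < cross q y -> 0 < cross p q -> cross p d < 0 -> 0 < cross q d ->
  0 < cross y d.
Proof. destruct p as [px py], q as [qx qy], y as [yx yy], d as [dx dy]; unfold cross; simpl; intros.
  assert (E: (yx*dy - yy*dx) * (px*qy - py*qx) = (yx*qy-yy*qx)*(px*dy-py*dx) + (px*yy-py*yx)*(qx*dy-qy*dx)) by ring.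
  nra. Qed.

Lemma mod_cases (x n : nat) : (n <> 0)%nat -> (x < 2*n)%nat ->
  ((x < n)%nat /\ (x mod n = x)%nat) \/ ((n <= x)%nat /\ (x mod n = x - n)%nat).
Proof. intros Hn Hx. destruct (Nat.lt_ge_cases x n) as [H|H].
  - left; split; auto; apply Nat.mod_small; auto.
  - right; split; auto. replace x with ((x - n) + 1*n)%nat at 1 by lia.
    rewrite Nat.Div0.mod_add. apply Nat.mod_small; lia. Qed.

Lemma succ_mod (n j : nat) : (j < n)%nat ->
  ((j+1 < n)%nat /\ ((j+1) mod n = j+1)%nat) \/ ((j+1 = n)%nat /\ ((j+1) mod n = 0)%nat).
Proof. intros H. destruct (mod_cases (j+1) n) as [[A B]|[A B]]; lia. Qed.

Lemma succ_lt n j : (j < n)%nat -> ((j+1) mod n < n)%nat.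
Proof. intros H; destruct (succ_mod n j H) as [[A B]|[A B]]; rewrite B; lia. Qed.
Lemma succ_ne n j : (3 <= n)%nat -> (j < n)%nat -> ((j+1) mod n <> j)%nat.
Proof. intros H0 H; destruct (succ_mod n j H) as [[A B]|[A B]]; rewrite B; lia. Qed.
Lemma succ2_ne n j : (3 <= n)%nat -> (j < n)%nat -> ((((j+1) mod n)+1) mod n <> j)%nat.
Proof. intros H0 H; destruct (succ_mod n j H) as [[A B]|[A B]]; rewrite B;
  [destruct (succ_mod n (j+1) A) as [[C D]|[C D]] | destruct (succ_mod n 0 ltac:(lia)) as [[C D]|[C D]]];
  rewrite D; lia. Qed.
Lemma succ_inj n j k : (j < n)%nat -> (k < n)%nat -> ((j+1) mod n = (k+1) mod n)%nat -> j = k.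
Proof. intros H1 H2; destruct (succ_mod n j H1) as [[A B]|[A B]]; rewrite B;
  destruct (succ_mod n k H2) as [[C D]|[C D]]; rewrite D; lia. Qed.
Lemma prev_succ n j : (3 <= n)%nat -> (j < n)%nat -> ((((j+1) mod n) + n - 1) mod n = j)%nat.
Proof. intros H0 H; destruct (succ_mod n j H) as [[A B]|[A B]]; rewrite B.
  - destruct (mod_cases (j + 1 + n - 1) n) as [[C D]|[C D]]; lia.
  - destruct (mod_cases (0 + n - 1) n) as [[C D]|[C D]]; lia. Qed.

Lemma corner X p m : convex_ccw X p -> angles_right_or_obtuse X p -> (3 <= nsides X p)%nat -> (m < nsides X p)%nat ->
  0 < cross (edge X p m) (edge X p ((m+1) mod nsides X p)) /\
  0 <= dot (edge X p m) (edge X p ((m+1) mod nsides X p)).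
Proof. intros Hc Ho H3 Hm.
  set (n := nsides X p) in *.
  set (m1 := ((m+1) mod n)%nat).
  assert (Hm1 : (m1 < n)%nat) by (apply succ_lt; auto).
  set (m2 := ((m1+1) mod n)%nat).
  assert (Hm2 : (m2 < n)%nat) by (apply succ_lt; auto).
  pose proof (Hc m m2 Hm Hm2 (succ2_ne n m H3 Hm) (succ_ne n m1 H3 Hm1)) as C.
  pose proof (Ho m1 Hm1) as O.
  unfold vprev in O. fold n in O. assert (Hp : ((m1 + n - 1) mod n = m)%nat) by (apply prev_succ; auto). rewrite Hp in O.
  unfold edge, vnext in C, O |- *. fold n in C, O |- *. fold m1 in C, O |- *. fold m2 in C, O |- *.
  destruct (vert X p m) as [a1 a2], (vert X p m1) as [b1 b2], (vert X p m2) as [c1 c2].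
  unfold cross, dot, psub in *; simpl in *. split; nra. Qed.

Lemma gmin X p b d k : convex_ccw X p -> angles_right_or_obtuse X p -> (3 <= nsides X p)%nat -> (b < nsides X p)%nat ->
  cross (edge X p b) d < 0 -> 0 < cross (edge X p ((b+1) mod nsides X p)) d ->
  (k < nsides X p)%nat -> k <> ((b+1) mod nsides X p)%nat ->
  cross (vert X p ((b+1) mod nsides X p)) d < cross (vert X p k) d.
Proof. intros Hc Ho H3 Hb Hd1 Hd2 Hk Hkm.
  set (n := nsides X p) in *.
  set (m := ((b+1) mod n)%nat) in *.
  assert (Hm : (m < n)%nat) by (apply succ_lt; auto).
  destruct (corner X p b Hc Ho H3 Hb) as [Cc _]. fold n m in Cc.
  destruct (Nat.eq_dec k ((m+1) mod n)) as [E1|E1].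
  { subst k. unfold edge, vnext in Hd2. fold n in Hd2.
    destruct (vert X p m) as [a1 a2], (vert X p ((m+1) mod n)) as [b1 b2], d as [d1 d2].
    unfold cross, psub in *; simpl in *; lra. }
  destruct (Nat.eq_dec k b) as [E2|E2].
  { subst k. unfold edge, vnext in Hd1. fold n m in Hd1.
    destruct (vert X p m) as [a1 a2], (vert X p b) as [b1 b2], d as [d1 d2].
    unfold cross, psub in *; simpl in *; lra. }
  pose proof (Hc b k Hb Hk E2 Hkm) as C1.
  pose proof (Hc m k Hm Hk Hkm E1) as C2.
  pose proof (VG (edge X p b) (edge X p m) (psub (vert X p k) (vert X p m)) d) as G.
  unfold edge, vnext in Hd1, Hd2, C1, C2, G, Cc |- *. fold n m in Hd1, Hd2, C1, C2, G, Cc |- *.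
  destruct (vert X p m) as [a1 a2], (vert X p b) as [b1 b2], (vert X p k) as [c1 c2],
    (vert X p ((m+1) mod n)) as [e1 e2], d as [d1 d2].
  unfold cross, psub in Hd1, Hd2, C1, C2, G, Cc |- *; simpl in Hd1, Hd2, C1, C2, G, Cc |- *.
  assert (0 < (c1 - a1) * d2 - (c2 - a2) * d1) by (apply G; nra). nra. Qed.

Lemma relint_succ_contra X p j x : convex_ccw X p -> (3 <= nsides X p)%nat -> (j < nsides X p)%nat ->
  in_side_relint X p j x -> in_side_relint X p ((j+1) mod nsides X p) x -> False.
Proof. intros Hc H3 Hj [t [Ht Hx]] [s [Hs Hx']].
  set (n := nsides X p) in *. set (k := ((j+1) mod n)%nat) in *.
  assert (Hk : (k < n)%nat) by (apply succ_lt; auto).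
  pose proof (Hc k j Hk Hj (not_eq_sym (succ_ne n j H3 Hj)) (not_eq_sym (succ2_ne n j H3 Hj))) as C.
  unfold edge at 1 in Hx. unfold vnext in Hx. fold n k in Hx.
  rewrite Hx in Hx'. clear Hx.
  destruct (edge X p k) as [e1 e2], (vert X p j) as [a1 a2], (vert X p k) as [b1 b2].
  unfold cross, psub, padd, pscale in *; simpl in *.
  injection Hx' as E1 E2.
  assert (E3 : (1 - t) * (a1 - b1) = s * e1) by lra.
  assert (E4 : (1 - t) * (a2 - b2) = s * e2) by lra.
  assert (E5 : (1 - t) * (e1 * (a2 - b2) - e2 * (a1 - b1)) = 0) .
  { transitivity (e1 * ((1 - t) * (a2 - b2)) - e2 * ((1 - t) * (a1 - b1))). ring.
    rewrite E3, E4. ring. }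
  nra. Qed.

Lemma relint_unique X p j k x : convex_ccw X p -> (3 <= nsides X p)%nat -> (j < nsides X p)%nat -> (k < nsides X p)%nat ->
  in_side_relint X p j x -> in_side_relint X p k x -> j = k.
Proof. intros Hc H3 Hj Hk Rj Rk.
  destruct (Nat.eq_dec j k) as [E|E]; auto.
  destruct (Nat.eq_dec k ((j+1) mod nsides X p)) as [E1|E1].
  { subst k. exfalso; exact (relint_succ_contra X p j x Hc H3 Hj Rj Rk). }
  destruct (Nat.eq_dec j ((k+1) mod nsides X p)) as [E2|E2].
  { subst j. exfalso; exact (relint_succ_contra X p k x Hc H3 Hk Rk Rj). }
  exfalso.
  set (n := nsides X p) in *.
  assert (Hj1 : ((j+1) mod n < n)%nat) by (apply succ_lt; auto).
  assert (E3 : ((j+1) mod n <> (k+1) mod n)%nat) by (intro HH; apply E; eapply succ_inj; eauto).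
  pose proof (Hc k j Hk Hj E E2) as C1.
  pose proof (Hc k ((j+1) mod n) Hk Hj1 (not_eq_sym E1) E3) as C2.
  destruct Rj as [t [Ht Hx]], Rk as [s [Hs Hx']].
  unfold edge at 1 in Hx. unfold vnext in Hx. fold n in Hx.
  rewrite Hx in Hx'. clear Hx.
  destruct (edge X p k) as [e1 e2], (vert X p j) as [a1 a2], (vert X p k) as [b1 b2],
     (vert X p ((j+1) mod n)) as [c1 c2].
  unfold cross, psub, padd, pscale in *; simpl in *.
  injection Hx' as F1 F2.
  assert (F3 : (1 - t) * (a1 - b1) + t * (c1 - b1) = s * e1) by lra.
  assert (F4 : (1 - t) * (a2 - b2) + t * (c2 - b2) = s * e2) by lra.
  assert (F5 : (1 - t) * (e1 * (a2 - b2) - e2 * (a1 - b1)) + t * (e1 * (c2 - b2) - e2 * (c1 - b1)) = 0).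
  { transitivity (e1 * ((1 - t) * (a2 - b2) + t * (c2 - b2)) - e2 * ((1 - t) * (a1 - b1) + t * (c1 - b1))). ring.
    rewrite F3, F4. ring. }
  nra. Qed.

Lemma cross_nn x y : cross (pscale (-1) x) (pscale (-1) y) = cross x y.
Proof. destruct x, y; unfold cross, pscale; simpl; ring. Qed.
Lemma dot_nn x y : dot (pscale (-1) x) (pscale (-1) y) = dot x y.
Proof. destruct x, y; unfold dot, pscale; simpl; ring. Qed.
Lemma cross_nd x y : cross x (pscale (-1) y) = - cross x y.
Proof. destruct x, y; unfold cross, pscale; simpl; ring. Qed.
Lemma neg_sym (x y : pt) : x = pscale (-1) y -> y = pscale (-1) x.
Proof. intros ->; destruct y; unfold pscale; simpl; f_equal; ring. Qed.

Lemma core X P Q a b g g' e e' d :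
  convex_ccw X P -> angles_right_or_obtuse X P -> convex_ccw X Q -> angles_right_or_obtuse X Q ->
  (3 <= nsides X P)%nat -> (3 <= nsides X Q)%nat ->
  (a < nsides X P)%nat -> (b < nsides X P)%nat -> (g < nsides X P)%nat -> (g' < nsides X P)%nat ->
  (e < nsides X Q)%nat -> (e' < nsides X Q)%nat ->
  sides_adjacent X P a b -> sides_adjacent X Q e e' -> sides_adjacent X P g g' ->
  edge X Q e = pscale (-1) (edge X P b) -> edge X P g = pscale (-1) (edge X Q e') ->
  0 < cross (edge X P a) d -> cross (edge X P b) d < 0 ->
  0 < cross (edge X P g) d -> cross (edge X P g') d < 0 ->
  a = g /\ b = g'.
Proof.
  intros HcP HoP HcQ HoQ H3P H3Q Ha Hb Hg Hg' He He' Aab Aee Agg Eeb Ege Da Db Dg Dg'.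
  apply neg_sym in Ege.
  destruct Aee as [Ee|Ee].
  -
    destruct (corner X Q e HcQ HoQ H3Q He) as [C1 C2]. rewrite <- Ee, Ege, Eeb, cross_nn, dot_nn in *.
    destruct Aab as [Eab|Eab].
    + exfalso. destruct (corner X P a HcP HoP H3P Ha) as [C3 C4]. rewrite <- Eab in C3, C4.
      exact (V1 _ _ _ _ C1 C2 Db Dg C3 C4 Da).
    + destruct Agg as [Egg|Egg].
      * exfalso. destruct (corner X P g HcP HoP H3P Hg) as [C3 C4]. rewrite <- Egg in C3, C4.
        exact (V2 _ _ _ _ C1 C2 Db Dg C3 C4 Dg').
      * assert (a = g).
        { destruct (Nat.eq_dec a g) as [E|E]; auto. exfalso.
          rewrite Eab in Da, E. rewrite Egg in Dg, E.
          pose proof (gmin X P b d ((g'+1) mod nsides X P) HcP HoP H3P Hb Db Da ltac:(apply succ_lt; auto) (not_eq_sym E)).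
          pose proof (gmin X P g' d ((b+1) mod nsides X P) HcP HoP H3P Hg' Dg' Dg ltac:(apply succ_lt; auto) E).
          lra. }
        split; auto. rewrite H in Eab. rewrite Eab in Egg. eapply succ_inj; eauto.
  -
    destruct (corner X Q e' HcQ HoQ H3Q He') as [C1 C2]. rewrite <- Ee, Ege, Eeb, cross_nn, dot_nn in *.
    destruct Aab as [Eab|Eab].
    + destruct Agg as [Egg|Egg].
      * assert (b = g').
        { destruct (Nat.eq_dec b g') as [E|E]; auto. exfalso.
          rewrite Eab in Db, E. rewrite Egg in Dg', E.
          assert (Da' : cross (edge X P a) (pscale (-1) d) < 0) by (rewrite cross_nd; lra).
          assert (Dg2 : cross (edge X P g) (pscale (-1) d) < 0) by (rewrite cross_nd; lra).
          assert (Db' : 0 < cross (edge X P ((a + 1) mod nsides X P)) (pscale (-1) d)) by (rewrite cross_nd; lra).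
          assert (Dg3 : 0 < cross (edge X P ((g + 1) mod nsides X P)) (pscale (-1) d)) by (rewrite cross_nd; lra).
          pose proof (gmin X P a (pscale (-1) d) ((g+1) mod nsides X P) HcP HoP H3P Ha Da' Db' ltac:(apply succ_lt; auto) (not_eq_sym E)).
          pose proof (gmin X P g (pscale (-1) d) ((a+1) mod nsides X P) HcP HoP H3P Hg Dg2 Dg3 ltac:(apply succ_lt; auto) E).
          lra. }
        split; auto. rewrite H in Eab. rewrite Eab in Egg. symmetry in Egg. eapply succ_inj; eauto.
      * exfalso. destruct (corner X P g' HcP HoP H3P Hg') as [C3 C4]. rewrite <- Egg in C3, C4.
        exact (V4 _ _ _ _ C1 C2 Db Dg C3 C4 Dg').
    + exfalso. destruct (corner X P b HcP HoP H3P Hb) as [C3 C4]. rewrite <- Eab in C3, C4.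
      exact (V3 _ _ _ _ C1 C2 Db Dg C3 C4 Da).
Qed.

Lemma seg_dirs X s d k p a b :
  (forall i, (i < length s)%nat -> exists t, 0 < t /\ pc_end (seg s i) = padd (pc_start (seg s i)) (pscale t d)) ->
  (forall i, (i < length s)%nat -> (pc_poly (seg s i) < npoly X)%nat /\
     forall u, 0 < u < 1 -> in_interior X (pc_poly (seg s i))
         (padd (pc_start (seg s i)) (pscale u (psub (pc_end (seg s i)) (pc_start (seg s i)))))) ->
  seg_type X s k p a b -> 0 < cross (edge X p a) d /\ cross (edge X p b) d < 0.
Proof. intros Hd Hi [Hk [Hp [Ha [Hb [Ra Rb]]]]].
  destruct (Hd k Hk) as [t [Ht Hy]]. destruct (Hi k Hk) as [_ Hin].
  specialize (Hin (1/2) ltac:(lra)). rewrite Hp in Hin.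
  pose proof (Hin a Ha) as Ia. pose proof (Hin b Hb) as Ib. clear Hin.
  destruct Ra as [sa [Hsa Ea]], Rb as [sb [Hsb Eb]].
  rewrite Hy in Ia, Ib, Eb.
  destruct (pc_start (seg s k)) as [x1 x2].
  destruct (edge X p a) as [a1 a2], (edge X p b) as [b1 b2], (vert X p a) as [va1 va2], (vert X p b) as [vb1 vb2], d as [d1 d2].
  unfold cross, psub, padd, pscale in *; simpl in *.
  injection Ea as Ea1 Ea2. injection Eb as Eb1 Eb2. subst x1 x2.
  split.
  - assert (HQ : a1 * (va2 + sa * a2 + 1 / 2 * (va2 + sa * a2 + t * d2 - (va2 + sa * a2)) - va2) -
      a2 * (va1 + sa * a1 + 1 / 2 * (va1 + sa * a1 + t * d1 - (va1 + sa * a1)) - va1) = (t/2) * (a1 * d2 - a2 * d1)) by field.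
    rewrite HQ in Ia. nra.
  - nra.
Qed.

Lemma junc X s k : translation_surface X -> transverse_chain X s -> (k + 1 < length s)%nat ->
  exists j l, (j < nsides X (pc_poly (seg s k)))%nat /\ (l < nsides X (pc_poly (seg s (k+1))))%nat /\
    in_side_relint X (pc_poly (seg s k)) j (pc_end (seg s k)) /\
    in_side_relint X (pc_poly (seg s (k+1))) l (pc_start (seg s (k+1))) /\
    glue X (pc_poly (seg s k)) j = (pc_poly (seg s (k+1)), l) /\
    glue X (pc_poly (seg s (k+1))) l = (pc_poly (seg s k), j) /\
    edge X (pc_poly (seg s (k+1))) l = pscale (-1) (edge X (pc_poly (seg s k)) j).
Proof. intros [_ HT] [_ [_ [Hi [_ [_ Hj]]]]] Hk.
  destruct (Hj k Hk) as [j [Hjn [Rj [Hq Hst]]]].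
  destruct (Hi k ltac:(lia)) as [Hp _].
  destruct (HT _ _ Hp Hjn) as [Hqn [Hln [Hg [_ He]]]].
  set (p := pc_poly (seg s k)) in *.
  destruct (glue X p j) as [q l] eqn:G. simpl in *.
  exists j, l. rewrite Hq. repeat split; auto.
  - destruct Rj as [t [Ht Hx]]. exists (1 - t). split; [lra|].
    rewrite Hst, Hx. change (edge X q l) with (psub (vnext X q l) (vert X q l)) in He |- *.
    destruct (vnext X q l) as [n1 n2], (vert X q l) as [w1 w2], (edge X p j) as [e1 e2], (vert X p j) as [v1 v2].
    unfold psub, padd, pscale in *; simpl in *. injection He as He1 He2.
    f_equal; nra.
Qed.

Lemma poly_ok X s k : transverse_chain X s -> (k < length s)%nat -> (pc_poly (seg s k) < npoly X)%nat.
Proof. intros [_ [_ [Hi _]]] Hk. apply (Hi k Hk). Qed.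

Lemma step_ne X s k : translation_surface X -> P2 X -> transverse_chain X s -> (k + 1 < length s)%nat ->
  pc_poly (seg s k) <> pc_poly (seg s (k+1)).
Proof. intros HT HP2 Hc Hk.
  destruct (junc X s k HT Hc Hk) as [j [l [Hj [_ [_ [_ [G _]]]]]]].
  pose proof (HP2 _ _ (poly_ok X s k Hc ltac:(lia)) Hj) as N. rewrite G in N. simpl in N. auto. Qed.

Lemma fwd X s k : translation_surface X -> P1 X -> transverse_chain X s -> (k + 3 < length s)%nat ->
  same_type X s k (k+2) -> pc_poly (seg s (k+1)) = pc_poly (seg s (k+3)).
Proof. intros HT HP1 Hc Hk [p [x [y [[H1 [P1e [Hx [Hy [_ Ry]]]]] [H2 [P2e [_ [_ [_ Ry2]]]]]]]]].
  destruct (junc X s k HT Hc ltac:(lia)) as [j [l [Hj [_ [Rj [_ [G _]]]]]]].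
  destruct (junc X s (k+2) HT Hc ltac:(lia)) as [j2 [l2 [Hj2 [_ [Rj2 [_ [G2 _]]]]]]].
  replace (k+2+1)%nat with (k+3)%nat in * by lia.
  rewrite P1e in Hj, Rj, G. rewrite P2e in Hj2, Rj2, G2.
  assert (Hp : (p < npoly X)%nat) by (rewrite <- P1e; apply (poly_ok X s k Hc); lia).
  destruct (HP1 p Hp) as [Cv _]. destruct HT as [H3 _]. specialize (H3 p Hp).
  pose proof (relint_unique X p j y _ Cv H3 Hj Hy Rj Ry).
  pose proof (relint_unique X p j2 y _ Cv H3 Hj2 Hy Rj2 Ry2). subst j j2.
  rewrite G in G2. injection G2; auto. Qed.

Lemma bwd X s k : translation_surface X -> P1 X -> transverse_chain X s -> (1 <= k)%nat -> (k + 2 < length s)%nat ->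
  same_type X s k (k+2) -> pc_poly (seg s (k-1)) = pc_poly (seg s (k+1)).
Proof. intros HT HP1 Hc Hk1 Hk [p [x [y [[H1 [P1e [Hx [Hy [Rx _]]]]] [H2 [P2e [_ [_ [Rx2 _]]]]]]]]].
  destruct (junc X s (k-1) HT Hc ltac:(lia)) as [j [l [_ [Hl [_ [Rl [_ [G _]]]]]]]].
  destruct (junc X s (k+1) HT Hc ltac:(lia)) as [j2 [l2 [_ [Hl2 [_ [Rl2 [_ [G2 _]]]]]]]].
  replace (k-1+1)%nat with k in * by lia.
  replace (k+1+1)%nat with (k+2)%nat in * by lia.
  rewrite P1e in Hl, Rl, G. rewrite P2e in Hl2, Rl2, G2.
  assert (Hp : (p < npoly X)%nat) by (rewrite <- P1e; apply (poly_ok X s k Hc); lia).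
  destruct (HP1 p Hp) as [Cv _]. destruct HT as [H3 _]. specialize (H3 p Hp).
  pose proof (relint_unique X p l x _ Cv H3 Hl Hx Rl Rx).
  pose proof (relint_unique X p l2 x _ Cv H3 Hl2 Hx Rl2 Rx2). subst l l2.
  rewrite G in G2. injection G2; auto. Qed.

Lemma KL X s k : translation_surface X -> P1 X -> transverse_chain X s -> (k + 2 < length s)%nat ->
  adjacent_seg X s k -> adjacent_seg X s (k+1) -> adjacent_seg X s (k+2) ->
  pc_poly (seg s k) = pc_poly (seg s (k+2)) -> same_type X s k (k+2).
Proof. intros HT HP1 Hc Hk [P [a [b [Sk Aab]]]] [Q [e [e' [Sk1 Aee]]]] [P' [g [g' [Sk2 Agg]]]] Heq.
  pose proof Hc as Hc'. destruct Hc' as [_ [[d [_ Hdir]] [Hint _]]].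
  destruct (seg_dirs X s d k P a b Hdir Hint Sk) as [Da Db].
  destruct (seg_dirs X s d (k+2) P' g g' Hdir Hint Sk2) as [Dg Dg'].
  destruct (junc X s k HT Hc ltac:(lia)) as [j [l [Hj [Hl [Rj [Rl [_ [_ E1]]]]]]]].
  destruct (junc X s (k+1) HT Hc ltac:(lia)) as [j2 [l2 [Hj2 [Hl2 [Rj2 [Rl2 [_ [_ E2]]]]]]]].
  replace (k+1+1)%nat with (k+2)%nat in * by lia.
  destruct Sk as [_ [PE [Ha [Hb [Ra Rb]]]]].
  destruct Sk1 as [_ [QE [He [He' [Re Re']]]]].
  pose proof Sk2 as Sk2'. destruct Sk2' as [_ [PE' [Hg [Hg' [Rg Rg']]]]].
  assert (PP : P' = P) by (rewrite <- PE, <- PE', Heq; auto). rewrite PP in *.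
  rewrite PE in Hj, Rj, E1. rewrite QE in Hl, Rl, E1, Hj2, Rj2, E2. rewrite PE' in Hl2, Rl2, E2.
  assert (HPn : (P < npoly X)%nat) by (rewrite <- PE; apply (poly_ok X s k Hc); lia).
  assert (HQn : (Q < npoly X)%nat) by (rewrite <- QE; apply (poly_ok X s (k+1) Hc); lia).
  destruct (HP1 P HPn) as [CP OP]. destruct (HP1 Q HQn) as [CQ OQ].
  pose proof (proj1 HT P HPn) as H3P. pose proof (proj1 HT Q HQn) as H3Q.
  pose proof (relint_unique X P j b _ CP H3P Hj Hb Rj Rb). subst j.
  pose proof (relint_unique X Q l e _ CQ H3Q Hl He Rl Re). subst l.
  pose proof (relint_unique X Q j2 e' _ CQ H3Q Hj2 He' Rj2 Re'). subst j2.
  pose proof (relint_unique X P l2 g _ CP H3P Hl2 Hg Rl2 Rg). subst l2.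
  destruct (core X P Q a b g g' e e' d CP OP CQ OQ H3P H3Q Ha Hb Hg Hg' He He' Aab Aee Agg E1 E2 Da Db Dg Dg')
    as [-> ->].
  exists P, g, g'. split; auto. repeat split; auto; lia.
Qed.

Theorem mainTheorem10 :
  forall (X : surface) (s : list piece) (a r : nat),
    translation_surface X -> P1 X -> P2 X ->
    saddle_connection X s -> ~ is_side X s -> ~ is_diagonal X s ->
    maximal_run X s a r -> ~ in_short_cylinder X s a r ->
    forall i, (a <= i)%nat -> (i + 2 < a + r)%nat ->
      pc_poly (seg s i) <> pc_poly (seg s (i + 1)) /\
      pc_poly (seg s (i + 1)) <> pc_poly (seg s (i + 2)) /\
      pc_poly (seg s i) <> pc_poly (seg s (i + 2)).
Proof.
  intros X s a r HT HP1 HP2 Hsc Hns Hnd Hrun Hncyl i Hai Hir.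
  destruct Hsc as [Hside|Hc]; [contradiction|].
  destruct Hrun as [Hr1 [Hlen [Hadj _]]].
  split; [apply (step_ne X); auto; lia|].
  split; [replace (i+2)%nat with (i+1+1)%nat by lia; apply (step_ne X); auto; lia|].
  intro Heq. apply Hncyl. split; [lia|].
  assert (KL' : forall k, (a <= k)%nat -> (k + 2 < a + r)%nat ->
     pc_poly (seg s k) = pc_poly (seg s (k+2)) -> same_type X s k (k+2)).
  { intros k H1 H2 H3. apply KL; auto; try lia; apply Hadj; lia. }
  assert (F : forall m, (i + m + 2 < a + r)%nat -> pc_poly (seg s (i+m)) = pc_poly (seg s (i+m+2))).
  { induction m as [|m IH]; intros Hm.
    - replace (i+0)%nat with i by lia. auto.
    - pose proof (KL' (i+m)%nat ltac:(lia) ltac:(lia) (IH ltac:(lia))) as ST.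
      pose proof (fwd X s (i+m)%nat HT HP1 Hc ltac:(lia) ST) as E.
      replace (i + S m)%nat with (i+m+1)%nat by lia. replace (i+m+1+2)%nat with (i+m+3)%nat by lia. auto. }
  assert (B : forall m, (m <= i - a)%nat -> pc_poly (seg s (i-m)) = pc_poly (seg s (i-m+2))).
  { induction m as [|m IH]; intros Hm.
    - replace (i-0)%nat with i by lia. auto.
    - pose proof (KL' (i-m)%nat ltac:(lia) ltac:(lia) (IH ltac:(lia))) as ST.
      pose proof (bwd X s (i-m)%nat HT HP1 Hc ltac:(lia) ltac:(lia) ST) as E.
      replace (i - S m)%nat with (i-m-1)%nat by lia. replace (i-m-1+2)%nat with (i-m+1)%nat by lia. auto. }
  intros k Hk1 Hk2. apply KL'; auto.
  destruct (Nat.le_ge_cases i k) as [L|L].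
  - pose proof (F (k - i)%nat ltac:(lia)) as E. replace (i + (k-i))%nat with k in E by lia. auto.
  - pose proof (B (i - k)%nat ltac:(lia)) as E. replace (i - (i-k))%nat with k in E by lia. auto.
Qed.
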